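(* Fix an integer $k\ge1$, let $\Delta_k:=\log(1/2)/\log(1-2^{-k})$, fix $\Delta>0$, and for $n\ge k$ let $m=\lfloor\Delta n\rfloor$. As $n\to\infty$: (i) if $\Delta>\Delta_k$ and $\psi_{\mathsf{FLAT}}(V):=\mathbf{1}\{Z(V)>0\}$, then $$\mathbf{P}_{\text{unif}}(\psi_{\mathsf{FLAT}}=1)\vee\mathbf{P}_{\text{planted}}(\psi_{\mathsf{FLAT}}=0)\to0;$$ (ii) if $\Delta<\Delta_k$, then $$\inf_{\psi}\ \mathbf{P}_{\text{unif}}(\psi=1)\vee\mathbf{P}_{\text{planted}}(\psi=0)\to\tfrac12,$$ where the infimum is over all tests $\psi$, i.e. (possibly randomized) $\{0,1\}$-valued functions of $V$.
   Context: A $k$-flat of $\mathbb{F}_2^n$ is an affine subspace of dimension $n-k$; equivalently a set $\{x\in\mathbb{F}_2^n : \ell_i(x)=\varepsilon_i \ \forall i\in[k]\}$ where $\ell_1,\dots,\ell_k$ are linearly independent linear forms on $\mathbb{F}_2^n$ and $\varepsilon_1,\dots,\varepsilon_k\in\mathbb{F}_2$. Let $q_0$ be the uniform distribution on the set of all $k$-flats, and for $x\in\mathbb{F}_2^n$ let $q_x$ be the uniform distribution on the set of $k$-flats not containing $x$. Define $\mathbf{P}_{\text{unif}}:=q_0^{\otimes m}$, $\mathbf{P}_{x}:=q_x^{\otimes m}$ and $\mathbf{P}_{\text{planted}}:=2^{-n}\sum_{x\in\mathbb{F}_2^n}\mathbf{P}_x$. For $V=(V_1,\dots,V_m)$, $\mathcal{S}(V)=\mathbb{F}_2^n\setminus\bigcup_j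 V_j$ and $Z(V)=|\mathcal{S}(V)|$. $a\vee b=\max(a,b)$. *)

(* Defs.v *)
From HB Require Import structures.
From mathcomp Require Import all_boot all_order all_algebra.
From Stdlib Require Import Reals.
Set Implicit Arguments. Unset Strict Implicit. Unset Printing Implicit Defensive.

Notation pt n := ('rV['F_2]_n).

Definition is_kflat (n k : nat) (A : {set pt n}) : bool :=
  [exists L : 'M['F_2]_(k, n), exists e : 'cV['F_2]_k,
     (\rank L == k) && (A == [set x : pt n | mulmx L (trmx x) == e])].

Definition kflats (n k : nat) : {set {set pt n}} := [set A | is_kflat k A].

Definition kflats_avoid (n k : nat) (x : pt n) : {set {set pt n}} :=
  [set A in kflats n k | x \notin A].

Notation obs n m := {ffun 'I_m -> {set pt n}}.

Definition Rsum {T : finType} (P : pred T) (f : T -> R) : R :=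
  \big[Rplus/R0]_(t in P) f t.

Definition E_unif (n k m : nat) (f : obs n m -> R) : R :=
  Rdiv (Rsum (fun V : obs n m => [forall j, V j \in kflats n k]) f)
       (INR (expn #|kflats n k| m)).

Definition E_x (n k m : nat) (x : pt n) (f : obs n m -> R) : R :=
  Rdiv (Rsum (fun V : obs n m => [forall j, V j \in kflats_avoid k x]) f)
       (INR (expn #|kflats_avoid k x| m)).

Definition E_planted (n k m : nat) (f : obs n m -> R) : R :=
  Rdiv (Rsum (fun _ : pt n => true) (fun x => E_x k x f)) (INR (expn 2 n)).

Definition Zc (n m : nat) (V : obs n m) : nat :=
  #|~: (\bigcup_(j < m) V j)|.

Definition psi_flat (n m : nat) (V : obs n m) : R :=
  if (0 < Zc V)%N then R1 else R0.

(* A (possibly randomized) test: psi V in [0,1] is the probability of output 1. *)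
Definition is_test (n m : nat) (psi : obs n m -> R) : Prop :=
  forall V, Rle R0 (psi V) /\ Rle (psi V) R1.

Definition test_err (n k m : nat) (psi : obs n m -> R) : R :=
  Rmax (E_unif k psi) (E_planted k (fun V => Rminus R1 (psi V))).

Definition Delta_k (k : nat) : R :=
  Rdiv (ln (Rinv 2%R)) (ln (Rminus R1 (Rinv (pow 2%R k)))).

Definition m_of (Delta : R) (n : nat) : nat := Z.to_nat (Int_part (Rmult Delta (INR n))).

Definition is_inf (E : R -> Prop) (b : R) : Prop :=
  (forall y, E y -> Rle b y) /\ (forall c, (forall y, E y -> Rle c y) -> Rle c b).

(* Main.v *)
Require Import Defs.
From HB Require Import structures.
From mathcomp Require Import all_boot all_order all_algebra.
From Stdlib Require Import Reals.
From mathcomp Require Import zify.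
From Stdlib Require Import Lra ZArith.
Set Implicit Arguments. Unset Strict Implicit. Unset Printing Implicit Defensive.
Import GRing.Theory.
Local Notation "m ^ n" := (expn m n) : nat_scope.

Section Lin.
Variables n k : nat.
Local Open Scope ring_scope.


Lemma card_sum (T : finType) (P : pred T) : #|[set x | P x]| = (\sum_x (P x : nat))%nat.
Proof.
rewrite -sum1_card big_mkcond /=; apply: eq_bigr => x _; rewrite inE; by case: (P x).
Qed.

Lemma card_pt : #|{: pt n}| = (expn 2 n).
Proof. by rewrite card_mx (@card_Fp 2 isT) mul1n. Qed.

Lemma kflat_card (A : {set pt n}) : A \in kflats n k -> (expn 2 k * #|A| = expn 2 n)%nat.
Proof.
rewrite inE => /existsP[L /existsP[e /andP[/eqP rkL /eqP ->]]].
pose f (x : pt n) : 'cV['F_2]_k := (L *m x^T)%R.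
have surj : forall v, exists u, f u = v.
  move=> v; have : (v^T <= L^T)%MS by apply: submx_full; rewrite /row_full mxrank_tr rkL.
  case/submxP => D hD; exists D; by rewrite /f -[v]trmxK hD trmx_mul trmxK.
have fB : forall x y, f (x - y) = f x - f y by move=> x y; rewrite /f raddfB /= mulmxBr.
have fD : forall x y, f (x + y) = f x + f y by move=> x y; rewrite /f raddfD /= mulmxDr.
have fib : forall v, #|[set x | f x == v]| = #|[set x | f x == 0]|.
  move=> v; case: (surj v) => u hu.
  rewrite -(card_imset _ (addIr (- u))); apply: eq_card => y.
  rewrite inE; apply/imsetP/eqP => [[x]|hy].
    by rewrite inE => /eqP hx ->; rewrite fB hx -hu subrr.
  exists (y + u); last by rewrite addrK.
  by rewrite inE fD hy hu add0r.
have tot : #|{: pt n}| = (\sum_(v : 'cV['F_2]_k) #|[set x | f x == v]|)%nat.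
  rewrite -sum1_card.
  transitivity (\sum_(i : pt n) \sum_(v : 'cV['F_2]_k) ((f i == v) : nat))%nat.
    apply: eq_bigr => x _; rewrite (bigD1 (f x)) //= eqxx big1 // => v hv.
    by rewrite eq_sym (negbTE hv).
  rewrite exchange_big /=; apply: eq_bigr => v _; by rewrite card_sum.
have ck : #|{: 'cV['F_2]_k}| = expn 2 k by rewrite card_mx (@card_Fp 2 isT) muln1.
move: tot; under eq_bigr do rewrite fib; rewrite sum_nat_const card_pt => ->.
transitivity (expn 2 k * #|[set x | f x == e]|)%nat; first by [].
by rewrite fib; congr (_ * _)%nat; rewrite -ck.
Qed.


Definition aff (M : 'M['F_2]_n) (t : pt n) (x : pt n) : pt n := x *m M + t.

Lemma aff_inj M t : M \in unitmx -> injective (aff M t).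
Proof.
move=> uM x y /addIr h.
by rewrite -(mulmxK uM x) h mulmxK.
Qed.

Lemma aff_kflat M t A : M \in unitmx -> A \in kflats n k ->
  [set aff M t x | x in A] \in kflats n k.
Proof.
move=> uM; rewrite !inE => /existsP[L /existsP[e /andP[/eqP rkL /eqP ->]]].
pose L' := L *m (invmx M)^T.
apply/existsP; exists L'; apply/existsP; exists (e + L' *m t^T).
rewrite mxrankMfree ?rkL ?eqxx /=; last by rewrite row_free_unit unitmx_tr unitmx_inv.
have key : forall x : pt n, L' *m (x *m M)^T = L *m x^T.
  move=> x; rewrite /L' trmx_mul -mulmxA (mulmxA _ M^T) -trmx_mul.
  by rewrite mulmxV // trmx1 mul1mx.
apply/eqP/setP => y; rewrite inE; apply/imsetP/idP.
  case=> x; rewrite inE => /eqP hx ->.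
  by rewrite /aff raddfD /= mulmxDr key hx.
move=> /eqP hy; exists ((y - t) *m invmx M).
  rewrite inE -key mulmxKV // raddfB /= mulmxBr hy.
  by rewrite addrK.
by rewrite /aff mulmxKV // subrK.
Qed.

Lemma F2_unit1 (c : 'M['F_2]_1) : c \in unitmx -> c = 1.
Proof.
rewrite unitmxE det_mx11 unitfE => h.
rewrite [c]mx11_scalar; congr (_%:M).
move: h; case: (c 0 0) => [[|[|i]] //] hi _; exact/val_inj.
Qed.

Lemma row_unit_trans (d : pt n) : d != 0 ->
  exists2 M : 'M['F_2]_n, M \in unitmx & (pid_mx 1 : 'M['F_2]_(1, n)) *m M = d.
Proof.
move=> dn0; exists (row_ebase d); first exact: row_ebase_unit.
have rk : \rank d = 1%nat.
  apply/eqP; rewrite eqn_leq rank_leq_row lt0n mxrank_eq0 dn0 //.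
have := mulmx_ebase d; rewrite rk (F2_unit1 (col_ebase_unit d)) mul1mx //.
Qed.

Lemma pair_trans (x y x' y' : pt n) : x != y -> x' != y' ->
  exists2 M : 'M['F_2]_n, M \in unitmx & exists t, aff M t x = x' /\ aff M t y = y'.
Proof.
move=> hxy hxy'.
have h0 : y - x != 0 by rewrite subr_eq0 eq_sym.
have [M1 u1 h1] := row_unit_trans h0.
have h0' : y' - x' != 0 by rewrite subr_eq0 eq_sym.
have [M2 u2 h2] := row_unit_trans h0'.
exists (invmx M1 *m M2); first by rewrite unitmx_mul unitmx_inv u1.
exists (x' - x *m (invmx M1 *m M2)); split; rewrite /aff.
  by rewrite addrC subrK.
have : (y - x) *m (invmx M1 *m M2) = y' - x' by rewrite -h1 mulmxA mulmxK.
rewrite mulmxBl => h.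
by rewrite addrA -(addrC (- _)) addrA (addrC (- _)) h subrK.
Qed.

End Lin.

Import GRing.Theory.

Section Count.
Variables n k : nat.
Hypothesis kn : (k <= n)%nat.
Hypothesis k1 : (1 <= k)%nat.
Local Open Scope ring_scope.

Local Notation K := (kflats n k).
Definition cnt1 (x : pt n) := #|[set A in K | x \in A]|.
Definition cnt2 (x y : pt n) := #|[set A in K | (x \in A) && (y \in A)]|.

Lemma card_in (T : finType) (S : {set T}) (P : pred T) :
  #|[set x in S | P x]| = (\sum_(x in S) (P x : nat))%nat.
Proof.
rewrite -sum1_card big_mkcond [RHS]big_mkcond /=; apply: eq_bigr => x _.
by rewrite inE; case: (x \in S); case: (P x).
Qed.

Lemma card_sumT (T : finType) (S : {set T}) : #|S| = (\sum_x (x \in S : nat))%nat.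
Proof. by rewrite -sum1_card big_mkcond. Qed.

Lemma cnt2_le x y x' y' : x != y -> x' != y' -> (cnt2 x y <= cnt2 x' y')%nat.
Proof.
move=> h h'; have [M uM [t [hx hy]]] := pair_trans h h'.
rewrite /cnt2 -(card_imset _ (imset_inj (@aff_inj _ _ t uM))).
apply: subset_leq_card; apply/subsetP => B /imsetP[A]; rewrite inE => /andP[AK /andP[xA yA]] ->.
rewrite inE aff_kflat //= -hx -hy !imset_f //.
Qed.

Lemma cnt2_eq x y x' y' : x != y -> x' != y' -> cnt2 x y = cnt2 x' y'.
Proof. by move=> h h'; apply/eqP; rewrite eqn_leq !cnt2_le. Qed.

Lemma cnt1_le x x' : (cnt1 x <= cnt1 x')%nat.
Proof.
have uM : ((scalar_mx 1) : 'M['F_2]_n) \in unitmx by rewrite unitmx1.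
have hx : aff (scalar_mx 1) (x' - x) x = x' by rewrite /aff mulmx1 GRing.addrC GRing.subrK.
rewrite /cnt1 -(card_imset _ (imset_inj (@aff_inj _ _ (x' - x) uM))).
apply: subset_leq_card; apply/subsetP => B /imsetP[A]; rewrite inE => /andP[AK xA] ->.
by rewrite inE aff_kflat //= -[X in X \in _]hx imset_f.
Qed.

Lemma cnt1_eq x x' : cnt1 x = cnt1 x'.
Proof. by apply/eqP; rewrite eqn_leq !cnt1_le. Qed.

Lemma sum_mem (A : {set pt n}) : (\sum_x (x \in A : nat))%nat = #|A|.
Proof. by rewrite card_sumT. Qed.

Lemma cnt1_val x : (expn 2 k * cnt1 x = #|K|)%nat.
Proof.
have S1 : (\sum_x cnt1 x = \sum_(A in K) #|A|)%nat.
  under eq_bigr do rewrite /cnt1 card_in.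
  rewrite exchange_big /=; apply: eq_bigr => A _; exact: sum_mem.
have S2 : (expn 2 k * \sum_(A in K) #|A| = #|K| * expn 2 n)%nat.
  rewrite big_distrr /= -sum_nat_const; apply: eq_bigr => A AK; exact: kflat_card.
have S3 : (\sum_x cnt1 x = expn 2 n * cnt1 x)%nat.
  under eq_bigr do rewrite (cnt1_eq _ x).
  by rewrite sum_nat_const card_pt.
move: S2; rewrite -S1 S3 mulnCA [RHS]mulnC => /eqP.
by rewrite eqn_pmul2l ?expn_gt0 // => /eqP.
Qed.


Lemma cnt2_diag x : cnt2 x x = cnt1 x.
Proof. by rewrite /cnt2 /cnt1 !card_in; apply: eq_bigr => A _; rewrite andbb. Qed.

Lemma cnt2_val x y : x != y -> (expn 2 k * expn 2 k * cnt2 x y <= #|K|)%nat.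
Proof.
move=> hxy.
set g := cnt2 x y; set N := expn 2 n; set P := expn 2 k; set F := #|K|.
have S1 : (\sum_x' \sum_y' cnt2 x' y' = \sum_(A in K) #|A| * #|A|)%nat.
  under eq_bigr do under eq_bigr do rewrite /cnt2 card_in.
  under eq_bigr do rewrite exchange_big /=.
  rewrite exchange_big /=; apply: eq_bigr => A _.
  rewrite [X in (X * _)%nat]card_sumT big_distrl /=; apply: eq_bigr => x' _.
  rewrite card_sumT big_distrr /=; apply: eq_bigr => y' _.
  by case: (x' \in A); case: (y' \in A).
have S2 : (P * P * \sum_(A in K) #|A| * #|A| = F * (N * N))%nat.
  rewrite big_distrr /= -sum_nat_const; apply: eq_bigr => A AK.
  have := kflat_card AK; rewrite -/P -/N => <-; by rewrite mulnACA.
have S3 : (\sum_x' \sum_y' cnt2 x' y' = N * (cnt1 x + (N - 1) * g))%nat.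
  rewrite /N -card_pt -sum_nat_const; apply: eq_bigr => x' _.
  rewrite (bigD1 x') //= cnt2_diag (cnt1_eq x' x); congr (_ + _)%nat.
  under eq_bigr => z hz do rewrite (@cnt2_eq x' z x y (ltac:(by rewrite eq_sym)) hxy) -/g.
  rewrite sum_nat_const; congr (_ * _)%nat.
  have := cardC1 x'; rewrite card_pt -subn1 -/N => <-; apply: eq_card => z; by rewrite !inE.
have hc := cnt1_val x; rewrite -/P -/F in hc.
have N2 : (2 <= N)%nat.
  by rewrite /N -[2%nat]/(expn 2 1) leq_exp2l //; apply: leq_trans kn.
have PN : (1 <= P)%nat by rewrite /P expn_gt0.
move: S2; rewrite -S1 S3 => h.
have h2 : (P * P * (cnt1 x + (N - 1) * g) = F * N)%nat.
  apply/eqP; rewrite -(eqn_pmul2l (_ : 0 < N)%nat); last by apply: leq_trans N2.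
  apply/eqP; nia.
nia.
Qed.

Lemma avoid_card x : (#|kflats_avoid k x| + cnt1 x = #|K|)%nat.
Proof.
rewrite /kflats_avoid /cnt1 !card_in -big_split /= -sum1_card.
apply: eq_bigr => A _; by case: (x \in A).
Qed.

Lemma pair_card x y :
  (#|[set A in K | (x \notin A) && (y \notin A)]| + cnt1 x + cnt1 y = #|K| + cnt2 x y)%nat.
Proof.
rewrite /cnt1 /cnt2 !card_in -sum1_card -!big_split /=.
apply: eq_bigr => A _.
by case: (x \in A); case: (y \in A).
Qed.

Lemma K_nonempty : (0 < #|K|)%nat.
Proof.
apply/card_gt0P; exists [set x : pt n | (pid_mx k : 'M['F_2]_(k, n)) *m x^T == 0].
rewrite inE; apply/existsP; exists (pid_mx k); apply/existsP; exists 0.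
by rewrite rank_pid_mx // !eqxx.
Qed.

End Count.


Fact RplusA' : associative Rplus.
Proof. by move=> *; rewrite Rplus_assoc. Qed.
Fact RmultA' : associative Rmult.
Proof. by move=> *; rewrite Rmult_assoc. Qed.
HB.instance Definition _ := Monoid.isComLaw.Build R R0 Rplus RplusA' Rplus_comm Rplus_0_l.
HB.instance Definition _ := Monoid.isComLaw.Build R R1 Rmult RmultA' Rmult_comm Rmult_1_l.
HB.instance Definition _ := Monoid.isMulLaw.Build R R0 Rmult Rmult_0_l Rmult_0_r.
HB.instance Definition _ := Monoid.isAddLaw.Build R Rmult Rplus
  Rmult_plus_distr_r Rmult_plus_distr_l.

Open Scope R_scope.

Section RS.
Variable T : finType.

Lemma Rsum_le (P : pred T) (f g : T -> R) :
  (forall t, P t -> f t <= g t) -> Rsum P f <= Rsum P g.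
Proof.
move=> h; rewrite /Rsum; apply: (big_ind2 (fun a b => a <= b)) => //.
  by apply: Rle_refl.
by move=> *; apply: Rplus_le_compat.
Qed.

Lemma Rsum_INR (P : pred T) (f : T -> nat) :
  Rsum P (fun t => INR (f t)) = INR (\sum_(t in P) f t)%nat.
Proof.
rewrite /Rsum; apply/esym; apply: (big_morph INR) => //.
by move=> x y; apply: plus_INR.
Qed.

Lemma Rsum_1 (P : pred T) : Rsum P (fun _ => 1) = INR #|P|.
Proof. by rewrite -sum1_card -Rsum_INR. Qed.

Lemma Rsum_scal (P : pred T) c (f : T -> R) : Rsum P (fun t => c * f t) = c * Rsum P f.
Proof. by rewrite /Rsum big_distrr. Qed.

Lemma Rsum_plus (P : pred T) (f g : T -> R) :
  Rsum P (fun t => f t + g t) = Rsum P f + Rsum P g.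
Proof. by rewrite /Rsum big_split. Qed.

Lemma Rsum_ext (P : pred T) (f g : T -> R) :
  (forall t, P t -> f t = g t) -> Rsum P f = Rsum P g.
Proof. by move=> h; rewrite /Rsum; apply: eq_bigr. Qed.

Lemma Rsum_ext_pred (P Q : pred T) (f : T -> R) : P =1 Q -> Rsum P f = Rsum Q f.
Proof. by move=> h; rewrite /Rsum; apply: eq_bigl => t; rewrite !unfold_in h. Qed.

Lemma Rsum_mkcond (P Q : pred T) (f : T -> R) :
  Rsum (fun t => P t && Q t) f = Rsum P (fun t => if Q t then f t else 0).
Proof.
rewrite /Rsum big_mkcond [RHS]big_mkcond; apply: eq_bigr => t _.
rewrite !unfold_in /=; by case: (P t); case: (Q t).
Qed.

End RS.

Lemma Rsum_exchange (T1 T2 : finType) (P1 : pred T1) (P2 : pred T2) (f : T1 -> T2 -> R) :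
  Rsum P1 (fun a => Rsum P2 (fun b => f a b)) = Rsum P2 (fun b => Rsum P1 (fun a => f a b)).
Proof. by rewrite /Rsum exchange_big. Qed.

Lemma INR_expn a b : INR (expn a b) = INR a ^ b.
Proof.
elim: b => [|b IH]; first by rewrite expn0.
by rewrite expnS mult_INR IH.
Qed.

Open Scope R_scope.

Lemma Rsum_const (T : finType) (P : pred T) c : Rsum P (fun _ => c) = INR #|P| * c.
Proof. by rewrite -Rsum_1 Rmult_comm -Rsum_scal; apply: Rsum_ext => t _; rewrite Rmult_1_r. Qed.

Lemma Rsum_mul (T1 T2 : finType) (P : pred T1) (Q : pred T2) f g :
  Rsum P f * Rsum Q g = Rsum P (fun a => Rsum Q (fun b => f a * g b)).
Proof.
rewrite /Rsum big_distrl /=; apply: eq_bigr => a _; by rewrite big_distrr.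
Qed.

Lemma INR2 : INR 2 = 2. Proof. by rewrite S_INR INR_1; lra. Qed.

Section Prob.
Variables n k m : nat.
Hypothesis kn : (k <= n)%nat.
Hypothesis k1 : (1 <= k)%nat.
Local Notation K := (kflats n k).
Definition PK (V : obs n m) := [forall j, V j \in K].
Definition ux (x : pt n) (V : obs n m) := [forall j, x \notin V j].
Local Notation Fr := (INR #|K|).
Local Notation r := (1 - / 2 ^ k).

Lemma count_family (S : {set {set pt n}}) :
  Rsum (fun V : obs n m => [forall j, V j \in S]) (fun _ => 1) = INR #|S| ^ m.
Proof.
rewrite Rsum_1 -INR_expn -[X in expn _ X](card_ord m) -card_ffun_on.
congr INR; apply: eq_card => V; by rewrite unfold_in /=.
Qed.

Lemma avoid_forall (x : pt n) (V : obs n m) : [forall j, V j \in kflats_avoid k x] = PK V && ux x V.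
Proof.
apply/forallP/andP => [h|[/forallP h1 /forallP h2] j].
  by split; apply/forallP => j; have := h j; rewrite /kflats_avoid in_set => /andP[].
by rewrite /kflats_avoid in_set h1 h2.
Qed.

Lemma B_forall (x y : pt n) (V : obs n m) :
  [forall j, V j \in [set A in K | (x \notin A) && (y \notin A)]] = PK V && (ux x V && ux y V).
Proof.
apply/forallP/and3P => [h|[/forallP h1 /forallP h2 /forallP h3] j].
  by split; apply/forallP => j; have := h j; rewrite in_set => /and3P[].
by rewrite in_set h1 h2 h3.
Qed.

Lemma Zc_sum (V : obs n m) : INR (Zc V) = Rsum (fun _ => true) (fun x => if ux x V then 1 else 0).
Proof.
rewrite /Zc card_sumT -Rsum_INR; apply: Rsum_ext => x _.
have -> : (x \in ~: \bigcup_(j < m) V j) = ux x V.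
  rewrite in_setC; apply/negP/forallP => [h j|h].
    by apply/negP => xV; apply: h; apply/bigcupP; exists j.
  by case/bigcupP => j _ xV; move: (h j); rewrite xV.
by case: (ux x V).
Qed.

Lemma Pk_pos : 0 < 2 ^ k. Proof. by apply: pow_lt; lra. Qed.
Lemma Pk_ge2 : 2 <= 2 ^ k.
Proof.
case: k k1 => [//|k'] _; rewrite /=.
have h : 1 <= 2 ^ k' by apply: pow_R1_Rle; lra.
lra.
Qed.
Lemma r_pos : 0 < r.
Proof. have := Pk_ge2; have := Pk_pos => h1 h2.
have : / 2 ^ k <= / 2 by apply: Rinv_le_contravar; lra.
lra.
Qed.
Lemma Fr_pos : 0 < Fr.
Proof. by apply: lt_0_INR; apply/ltP; exact: K_nonempty kn. Qed.

Lemma c1R x : 2 ^ k * INR (@cnt1 n k x) = Fr.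
Proof. by rewrite -(cnt1_val k x) mult_INR INR_expn INR2. Qed.

Lemma a_val (x : pt n) : INR #|kflats_avoid k x| = Fr * r.
Proof.
have h := avoid_card k x; have h2 := c1R x.
move/(f_equal INR): h; rewrite plus_INR => h.
have hP := Pk_pos.
have e : INR (@cnt1 n k x) = Fr / 2 ^ k by rewrite -h2; field; lra.
rewrite e /Rdiv in h; lra.
Qed.

Lemma b_val (x y : pt n) : x != y ->
  INR #|[set A in K | (x \notin A) && (y \notin A)]| <= Fr * r ^ 2.
Proof.
move=> hxy.
have h := pair_card k x y; move/(f_equal INR): h; rewrite !plus_INR => h.
have hc2 := cnt2_val kn k1 hxy; move/le_INR: (elimT leP hc2); rewrite !mult_INR !INR_expn INR2 => hc2'.
have hx := c1R x; have hy := c1R y; have hP := Pk_pos.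
set B := INR _ in h *; set P := 2 ^ k in hx hy hP hc2' *.
have -> : Fr * (1 - / P) ^ 2 = Fr - 2 * (Fr / P) + Fr / (P * P) by field; lra.
have e1 : INR (@cnt1 n k x) = Fr / P by rewrite -hx; field; lra.
have e2 : INR (@cnt1 n k y) = Fr / P by rewrite -hy; field; lra.
have e3 : INR (@cnt2 n k x y) <= Fr / (P * P).
  apply: (Rmult_le_reg_l (P * P)); first nra.
  by rewrite /Rdiv -Rmult_assoc Rinv_r_simpl_m //; nra.
lra.
Qed.


Lemma cardT_pt : #|(fun _ : pt n => true)| = expn 2 n.
Proof. by rewrite -card_pt; apply: eq_card. Qed.

Lemma S1 : Rsum PK (fun _ => 1) = Fr ^ m.
Proof. exact: count_family. Qed.

Lemma Sux (x : pt n) : Rsum PK (fun V => if ux x V then 1 else 0) = (Fr * r) ^ m.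
Proof.
rewrite -(Rsum_mkcond PK (ux x)) -(a_val x) -count_family.
by apply: Rsum_ext_pred => V; rewrite avoid_forall.
Qed.

Lemma SZ : Rsum PK (fun V => INR (Zc V)) = INR (expn 2 n) * (Fr * r) ^ m.
Proof.
rewrite (Rsum_ext (g := fun V => Rsum (fun _ => true) (fun x => if ux x V then 1 else 0)));
  last by move=> V _; rewrite Zc_sum.
rewrite Rsum_exchange (Rsum_ext (g := fun _ => (Fr * r) ^ m)); last by move=> x _; apply: Sux.
by rewrite Rsum_const cardT_pt.
Qed.

Lemma Suxy (x y : pt n) : Rsum PK (fun V => (if ux x V then 1 else 0) * (if ux y V then 1 else 0))
  <= (if x == y then (Fr * r) ^ m else 0) + (Fr * r ^ 2) ^ m.
Proof.
rewrite (Rsum_ext (g := fun V => if ux x V && ux y V then 1 else 0)); last first.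
  by move=> V _; case: (ux x V); case: (ux y V); rewrite /= ?Rmult_1_r ?Rmult_0_r ?Rmult_0_l.
rewrite -(Rsum_mkcond PK (fun V => ux x V && ux y V)).
rewrite (Rsum_ext_pred _ (Q := fun V : obs n m => [forall j, V j \in [set A in K | (x \notin A) && (y \notin A)]]));
  last by move=> V; rewrite B_forall.
rewrite count_family.
have hr := r_pos; have hF := Fr_pos.
case: eqP => [<-|/eqP hxy].
  have -> : #|[set A in K | (x \notin A) && (x \notin A)]| = #|kflats_avoid k x|.
    by apply: eq_card => A; rewrite !inE andbb.
  rewrite a_val; have : 0 <= (Fr * r ^ 2) ^ m by apply: pow_le; apply: Rmult_le_pos; [lra|apply: pow_le; lra].
  lra.
rewrite Rplus_0_l; apply: pow_incr; split; [exact: pos_INR| exact: b_val].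
Qed.

Lemma SZ2 : Rsum PK (fun V => INR (Zc V) * INR (Zc V)) <=
  INR (expn 2 n) * (Fr * r) ^ m + INR (expn 2 n) * INR (expn 2 n) * (Fr * r ^ 2) ^ m.
Proof.
rewrite (Rsum_ext (g := fun V => Rsum (fun _ => true) (fun x => Rsum (fun _ => true) (fun y =>
   (if ux x V then 1 else 0) * (if ux y V then 1 else 0))))); last first.
  by move=> V _; rewrite !Zc_sum Rsum_mul.
rewrite Rsum_exchange.
apply: Rle_trans (_ : Rsum (fun _ => true) (fun x => Rsum (fun _ => true) (fun y =>
   (if x == y then (Fr * r) ^ m else 0) + (Fr * r ^ 2) ^ m)) <= _).
  apply: Rsum_le => x _; rewrite Rsum_exchange; apply: Rsum_le => y _; exact: Suxy.
apply: Req_le.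
rewrite (Rsum_ext (g := fun _ => (Fr * r) ^ m + INR (expn 2 n) * (Fr * r ^ 2) ^ m)).
  by rewrite Rsum_const cardT_pt; ring.
move=> x _; rewrite Rsum_plus Rsum_const cardT_pt; congr (_ + _).
rewrite /Rsum (bigD1 x) //= eqxx big1 ?Rplus_0_r // => y hy.
by rewrite eq_sym (negbTE hy).
Qed.

End Prob.

Open Scope R_scope.

Lemma Rsum_scal_r (T : finType) (P : pred T) c (f : T -> R) :
  Rsum P (fun t => f t * c) = Rsum P f * c.
Proof. by rewrite Rmult_comm -Rsum_scal; apply: Rsum_ext => t _; rewrite Rmult_comm. Qed.

Lemma pow2_m x m : (x ^ 2) ^ m = x ^ m * x ^ m.
Proof. elim: m => [|m IH] /=; first ring. rewrite IH; ring. Qed.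

Lemma pw (p z mu l : R) : 0 <= p <= 1 -> 0 < mu -> 0 < l ->
  (1 - l / 2 - / (2 * l)) + l / mu * z + (- (l / (2 * (mu * mu)))) * (z * z)
  <= p + (1 - p) * z / mu.
Proof.
move=> hp hmu hl.
set w := z / mu - 1.
have hz : z = mu * (w + 1) by rewrite /w; field; lra.
rewrite hz.
have -> : 1 - l / 2 - / (2 * l) + l / mu * (mu * (w + 1)) +
   - (l / (2 * (mu * mu))) * (mu * (w + 1) * (mu * (w + 1))) = 1 - / (2 * l) - l / 2 * (w * w).
  by field; lra.
have -> : p + (1 - p) * (mu * (w + 1)) / mu = 1 + (1 - p) * w by field; lra.
have e : / (2 * l) = (1 / l) / 2 by field; lra.
rewrite e.
have hl' : 0 < 1 / l by apply: Rdiv_lt_0_compat; lra.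
have key : Rabs w <= l / 2 * (w * w) + 1 / l / 2.
  have : 0 <= (l * Rabs w - 1) * (l * Rabs w - 1) by apply: Rle_0_sqr.
  have ha : Rabs w * Rabs w = w * w by rewrite -Rabs_mult Rabs_right; nra.
  move=> h.
  apply: (Rmult_le_reg_l l) => //.
  have -> : l * (l / 2 * (w * w) + 1 / l / 2) = (l * l * (w * w) + 1) / 2 by field; lra.
  rewrite -ha; nra.
have : - ((1 - p) * w) <= Rabs w.
  case: (Rle_lt_dec 0 w) => hw; [rewrite Rabs_right; nra | rewrite Rabs_left; nra].
lra.
Qed.

Section Terr.
Variables n k m : nat.
Hypothesis kn : (k <= n)%nat.
Hypothesis k1 : (1 <= k)%nat.
Local Notation K := (kflats n k).
Local Notation Fr := (INR #|K|).
Local Notation r := (1 - / 2 ^ k).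
Local Notation N := (Fr ^ m).
Local Notation mu := (INR (expn 2 n) * r ^ m).

Lemma N_pos : 0 < N. Proof. apply: pow_lt; exact: Fr_pos kn. Qed.
Lemma mu_pos : 0 < mu.
Proof.
apply: Rmult_lt_0_compat; first by apply: lt_0_INR; apply/ltP; rewrite expn_gt0.
by apply: pow_lt; apply: r_pos.
Qed.

Lemma Eu (g : obs n m -> R) : E_unif k g = Rsum (@PK n k m) g / N.
Proof. by rewrite /E_unif INR_expn. Qed.

Lemma Ep (g : obs n m -> R) :
  E_planted k g = Rsum (@PK n k m) (fun V => g V * INR (Zc V)) / (mu * N).
Proof.
rewrite /E_planted /E_x.
rewrite (Rsum_ext (g := fun x => Rsum (@PK n k m) (fun V => (if ux x V then g V else 0)) * / (Fr * r) ^ m));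
  last first.
  move=> x _; rewrite /Rdiv INR_expn (a_val k) -Rsum_mkcond; congr (_ * _).
  by apply: Rsum_ext_pred => V; rewrite avoid_forall.
rewrite Rsum_scal_r Rsum_exchange.
rewrite (Rsum_ext (g := fun V => g V * INR (Zc V))); last first.
  move=> V _; rewrite Zc_sum -Rsum_scal; apply: Rsum_ext => x _.
  by case: (ux x V); rewrite ?Rmult_1_r ?Rmult_0_r.
have h1 := mu_pos; have h2 := N_pos; have h3 := r_pos k1; have h4 := Fr_pos kn.
have h5 : 0 < INR (expn 2 n) by apply: lt_0_INR; apply/ltP; rewrite expn_gt0.
rewrite Rpow_mult_distr /Rdiv; field; split; try lra.
split; [apply: Rgt_not_eq; apply: pow_lt | ]; lra.
Qed.


Lemma SZ' : Rsum (@PK n k m) (fun V => INR (Zc V)) = mu * N.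
Proof. rewrite (SZ n k m) Rpow_mult_distr; ring. Qed.

Lemma SZ2' : Rsum (@PK n k m) (fun V => INR (Zc V) * INR (Zc V)) <= (mu + mu * mu) * N.
Proof.
apply: Rle_trans (SZ2 m kn k1) _; apply: Req_le.
rewrite !Rpow_mult_distr pow1; ring.
Qed.

Lemma terr_flat : 0 <= test_err k (@psi_flat n m) <= mu.
Proof.
have hN := N_pos; have hmu := mu_pos.
have e2 : E_planted k (fun V => 1 - @psi_flat n m V) = 0.
  rewrite Ep (Rsum_ext (g := fun _ => 0)); last first.
    move=> V _; rewrite /psi_flat; case: ltnP => h; first ring.
    have -> : Zc V = 0%nat by apply/eqP; rewrite -leqn0.
    rewrite /=; ring.
  rewrite Rsum_const /Rdiv; ring.
have e1 : 0 <= E_unif k (@psi_flat n m) <= mu.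
  rewrite Eu; split.
    apply: Rmult_le_pos; last by apply: Rlt_le; apply: Rinv_0_lt_compat.
    apply: Rle_trans (_ : Rsum (@PK n k m) (fun _ => 0) <= _); first by rewrite Rsum_const Rmult_0_r; lra.
    apply: Rsum_le => V _.
    rewrite /psi_flat; case: ltnP => _; lra.
  apply: (Rmult_le_reg_r N) => //; rewrite /Rdiv Rmult_assoc Rinv_l ?Rmult_1_r; last lra.
  rewrite -SZ'; apply: Rsum_le => V _; rewrite /psi_flat; case: ltnP => h.
    by apply: (le_INR 1); apply/leP.
  exact: pos_INR.
rewrite /test_err e2 Rmax_left; lra.
Qed.

Lemma terr_lower (psi : obs n m -> R) (l : R) : is_test psi -> 0 < l ->
  (1 - l / (2 * mu) - / (2 * l)) / 2 <= test_err k psi.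
Proof.
move=> hpsi hl; have hN := N_pos; have hmu := mu_pos.
have hrm : 0 < r ^ m by apply: pow_lt; apply: r_pos.
have h2n : 0 < INR (expn 2 n) by apply: lt_0_INR; apply/ltP; rewrite expn_gt0.
rewrite /test_err Eu Ep.
set S1' := Rsum _ psi.
set S2' := Rsum _ (fun V => (1 - psi V) * INR (Zc V)).
have key : N * (1 - l / (2 * mu) - / (2 * l)) <= S1' + S2' / mu.
  have hsum : Rsum (@PK n k m) (fun V => psi V + (1 - psi V) * INR (Zc V) / mu) = S1' + S2' / mu.
    rewrite Rsum_plus /S2' /Rdiv -Rsum_scal_r; congr (_ + _).
  rewrite -hsum.
  apply: Rle_trans (_ : Rsum (@PK n k m) (fun V =>
     (1 - l / 2 - / (2 * l)) + l / mu * INR (Zc V) + (- (l / (2 * (mu * mu)))) * (INR (Zc V) * INR (Zc V))) <= _); last first.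
    by apply: Rsum_le => V _; apply: pw => //; apply: hpsi.
  have hP : INR #|@PK n k m| = N by rewrite -(S1 n k m) Rsum_1.
  rewrite !Rsum_plus !Rsum_scal !Rsum_const hP SZ'.
  have h2 := SZ2'.
  have hc : 0 <= l / (2 * (mu * mu)) by apply: Rlt_le; apply: Rdiv_lt_0_compat; nra.
  have : - (l / (2 * (mu * mu))) * Rsum (@PK n k m) (fun V => INR (Zc V) * INR (Zc V))
         >= - (l / (2 * (mu * mu))) * ((mu + mu * mu) * N) by nra.
  have -> : N * (1 - l / (2 * mu) - / (2 * l)) =
     N * 1 + N * (- (l / 2)) + N * (- / (2 * l)) + l / mu * (mu * N) + - (l / (2 * (mu * mu))) * ((mu + mu * mu) * N).
    by field; repeat split; lra.
  lra.
have h1 : S1' / N + S2' / (mu * N) = (S1' + S2' / mu) / N by field; lra.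
have h3 : (1 - l / (2 * mu) - / (2 * l)) <= (S1' + S2' / mu) / N.
  apply: (Rmult_le_reg_r N) => //; rewrite /Rdiv Rmult_assoc Rinv_l ?Rmult_1_r; last lra.
  rewrite Rmult_comm; exact: key.
have := Rmax_l (S1' / N) (S2' / (mu * N)); have := Rmax_r (S1' / N) (S2' / (mu * N)).
lra.
Qed.

Lemma terr_half : test_err k (fun _ : obs n m => / 2) = / 2.
Proof.
have hN := N_pos; have hmu := mu_pos.
rewrite /test_err Eu Ep Rsum_const -Rsum_1 (S1 n k m).
rewrite (Rsum_ext (g := fun V => / 2 * INR (Zc V))); last by move=> V _; field.
rewrite Rsum_scal SZ'.
have -> : Fr ^ m * / 2 / Fr ^ m = / 2 by field; lra.
have -> : / 2 * (mu * Fr ^ m) / (mu * Fr ^ m) = / 2.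
  have hrm : 0 < r ^ m by apply: pow_lt; apply: r_pos.
  have h2n : 0 < INR (expn 2 n) by apply: lt_0_INR; apply/ltP; rewrite expn_gt0.
  by field; repeat split; lra.
by rewrite Rmax_left; lra.
Qed.

End Terr.

Open Scope R_scope.

Lemma exp_le' x y : x <= y -> exp x <= exp y.
Proof.
move=> h; case: (Rle_lt_or_eq_dec _ _ h) => h'.
  by apply: Rlt_le; apply: exp_increasing.
by rewrite h'; apply: Rle_refl.
Qed.

Lemma exp_mulINR (c : R) (n : nat) : exp (INR n * c) = exp c ^ n.
Proof.
elim: n => [|n IH]; first by rewrite /= Rmult_0_l exp_0.
by rewrite S_INR Rmult_plus_distr_r Rmult_1_l exp_plus IH /=; ring.
Qed.

Lemma m_of_bounds (Delta : R) (n : nat) : 0 < Delta ->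
  Delta * INR n - 1 < INR (m_of Delta n) <= Delta * INR n.
Proof.
move=> hD; rewrite /m_of.
have [h1 h2] := base_Int_part (Delta * INR n).
have hn := pos_INR n.
have hz : (0 <= Int_part (Delta * INR n))%Z.
  have : -1 < IZR (Int_part (Delta * INR n)) by nra.
  move=> h; have : (-1 < Int_part (Delta * INR n))%Z by apply: lt_IZR.
  lia.
rewrite [INR (Z.to_nat _)]INR_IZR_INZ Z2Nat.id //; lra.
Qed.

Section Asym.
Variables (k : nat) (Delta : R).
Hypothesis k1 : (1 <= k)%nat.
Hypothesis hD : 0 < Delta.
Local Notation r := (1 - / 2 ^ k).
Local Notation mu n := (INR (expn 2 n) * r ^ (m_of Delta n)).
Local Notation c := (ln 2 + Delta * ln r).

Lemma lnr_neg : ln r < 0.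
Proof.
have hr := r_pos k1; rewrite -ln_1; apply: ln_increasing => //.
have := Pk_pos k; have : 0 < / 2 ^ k by apply: Rinv_0_lt_compat; apply: Pk_pos.
lra.
Qed.

Lemma mu_exp n : mu n = exp (INR n * ln 2 + INR (m_of Delta n) * ln r).
Proof.
have hr := r_pos k1.
rewrite exp_plus INR_expn INR2 -!ln_pow ?exp_ln //; try lra.
  by apply: pow_lt.
by apply: pow_lt; lra.
Qed.

Lemma mu_upper n : mu n <= / r * exp c ^ n.
Proof.
have hr := r_pos k1; have hl := lnr_neg.
have [hm1 hm2] := m_of_bounds n hD.
rewrite mu_exp -exp_mulINR.
have -> : / r = exp (- ln r) by rewrite exp_Ropp exp_ln.
rewrite -exp_plus; apply: exp_le'.
have : INR (m_of Delta n) * ln r <= (Delta * INR n - 1) * ln r by nra.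
lra.
Qed.

Lemma mu_lower n : exp c ^ n <= mu n.
Proof.
have hr := r_pos k1; have hl := lnr_neg.
have [hm1 hm2] := m_of_bounds n hD.
rewrite mu_exp -exp_mulINR; apply: exp_le'.
have : Delta * INR n * ln r <= INR (m_of Delta n) * ln r by nra.
nra.
Qed.

Lemma c_neg : Delta_k k < Delta -> c < 0.
Proof.
rewrite /Delta_k => h; have hl := lnr_neg.
rewrite ln_Rinv in h; last lra.
have hL : / ln r * ln r = 1 by apply: Rinv_l; lra.
rewrite /Rdiv in h.
set L := ln r in h hl hL *; set X := ln 2 in h *.
have h3 : 0 < (Delta - - X * / L) * (- L) by apply: Rmult_lt_0_compat; lra.
have e : (Delta - - X * / L) * (- L) = - (Delta * L) - X * (/ L * L) by ring.
rewrite e hL in h3; lra.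
Qed.

Lemma c_pos : Delta < Delta_k k -> 0 < c.
Proof.
rewrite /Delta_k => h; have hl := lnr_neg.
rewrite ln_Rinv in h; last lra.
have hL : / ln r * ln r = 1 by apply: Rinv_l; lra.
rewrite /Rdiv in h.
set L := ln r in h hl hL *; set X := ln 2 in h *.
have h3 : 0 < (- X * / L - Delta) * (- L) by apply: Rmult_lt_0_compat; lra.
have e : (- X * / L - Delta) * (- L) = X * (/ L * L) + Delta * L by ring.
rewrite e hL in h3; lra.
Qed.

End Asym.

Close Scope R_scope.
Delimit Scope nat_scope with N.
Theorem mainTheorem5 (k : nat) (Delta : R) :
  (1 <= k)%N -> Rlt R0 Delta ->
  (* (i) *)
  (Rlt (Delta_k k) Delta ->
     Un_cv (fun n => test_err k (@psi_flat n (m_of Delta n))) R0) /\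
  (* (ii) *)
  (Rlt Delta (Delta_k k) ->
     forall I : nat -> R,
       (forall n, (k <= n)%N ->
          is_inf (fun r => exists psi : {ffun 'I_(m_of Delta n) -> {set 'rV['F_2]_n}} -> R,
                             is_test psi /\ r = test_err k psi) (I n)) ->
       Un_cv I (Rinv 2)).
Proof.
Open Scope R_scope.
move=> k1 hD; have hr := r_pos k1; split.
- move=> hlt eps heps.
  have hc := c_neg k1 hlt.
  set q := exp (ln 2 + Delta * ln (1 - / 2 ^ k)).
  have hq0 : 0 < q by apply: exp_pos.
  have hq1 : q < 1 by rewrite -exp_0 /q; apply: exp_increasing.
  have [N0 HN] := pow_lt_1_zero q (ltac:(rewrite Rabs_right; lra)) (eps * (1 - / 2 ^ k)) (ltac:(nra)).
  exists (N0 + k)%nat => n hn.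
  have kn : (k <= n)%nat by apply/leP; lia.
  have [t0 t1] := terr_flat (m_of Delta n) kn k1.
  have hu := mu_upper k1 hD n.
  have := HN n (ltac:(lia)); rewrite Rabs_right; last by apply: Rle_ge; apply: pow_le; lra.
  move=> hqn.
  rewrite /R_dist Rminus_0_r Rabs_right; last lra.
  have : / (1 - / 2 ^ k) * q ^ n < eps.
    apply: (Rmult_lt_reg_l (1 - / 2 ^ k)) => //.
    rewrite -Rmult_assoc Rinv_r; last lra.
    lra.
  rewrite -/q in hu.
  lra.
- move=> hlt I hI eps heps.
  have hc := c_pos k1 hlt.
  set q := exp (ln 2 + Delta * ln (1 - / 2 ^ k)).
  have hq0 : 0 < q by apply: exp_pos.
  have hq1 : 1 < q by rewrite -exp_0 /q; apply: exp_increasing.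
  have hiq : Rabs (/ q) < 1.
    rewrite Rabs_right; last by apply: Rle_ge; apply: Rlt_le; apply: Rinv_0_lt_compat.
    rewrite -Rinv_1; apply: Rinv_lt_contravar; lra.
  have [N0 HN] := pow_lt_1_zero (/ q) hiq (eps * eps) (ltac:(nra)).
  exists (N0 + k)%nat => n hn.
  have kn : (k <= n)%nat by apply/leP; lia.
  have hl := mu_lower k1 hD n; rewrite -/q in hl.
  have hqn : / (eps * eps) < q ^ n.
    have := HN n (ltac:(lia)); rewrite pow_inv Rabs_right; last first.
      by apply: Rle_ge; apply: Rlt_le; apply: Rinv_0_lt_compat; apply: pow_lt.
    move=> h; have hqp : 0 < q ^ n by apply: pow_lt.
    rewrite -(Rinv_inv (q ^ n)); apply: Rinv_lt_contravar; last exact: h.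
    apply: Rmult_lt_0_compat; [by apply: Rinv_0_lt_compat | nra].
  set mu := INR (expn 2 n) * (1 - / 2 ^ k) ^ m_of Delta n in hl.
  have hmu : / (eps * eps) < mu by lra.
  have [hinf1 hinf2] := hI n kn.
  have up : I n <= / 2.
    apply: hinf1; exists (fun _ => / 2); split; first by move=> V; lra.
    by rewrite (terr_half (m_of Delta n) kn k1).
  have low : (1 - / eps / (2 * mu) - / (2 * / eps)) / 2 <= I n.
    apply: hinf2 => y [psi [hpsi ->]].
    by apply: terr_lower => //; apply: Rinv_0_lt_compat.
  have hmupos : 0 < mu by apply: Rlt_trans hmu; apply: Rinv_0_lt_compat; nra.
  have e1 : / (2 * / eps) = eps / 2 by field; lra.
  have e2 : / eps / (2 * mu) = / (2 * (eps * mu)) by field; lra.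
  have h3 : / eps < eps * mu.
    have : eps * / (eps * eps) < eps * mu by apply: Rmult_lt_compat_l.
    have -> : eps * / (eps * eps) = / eps by field; lra.
    done.
  have h4 : / (2 * (eps * mu)) < eps / 2.
    rewrite -e1; apply: Rinv_lt_contravar; last lra.
    have : 0 < / eps by apply: Rinv_0_lt_compat.
    nra.
  rewrite e1 e2 in low.
  rewrite /R_dist Rabs_left1; lra.
Qed.
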